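(* Let $\lambda$ be a nonzero real number and $x$ a real number with $1+\lambda x>0$. Then for every integer $n\ge0$, \[ \mathrm{Bel}_{n+1,\lambda}(x)=x\sum_{l=0}^{n}\binom{n}{l}\big(\mathrm{Bel}_{l,\lambda}(x)-\lambda\,\mathrm{Bel}_{l+1,\lambda}(x)\big). \]
   Context: For nonzero real $\lambda$, $e_\lambda(x)=(1+\lambda x)^{1/\lambda}$ and $e_\lambda^{-1}(x)=(1+\lambda x)^{-1/\lambda}$. The new type degenerate Bell polynomials $\mathrm{Bel}_{n,\lambda}(x)$ are defined by $e_{\lambda}(xe^{t})\,e_{\lambda}^{-1}(x)=\big(\frac{1+\lambda xe^t}{1+\lambda x}\big)^{1/\lambda}=\sum_{n=0}^{\infty}\mathrm{Bel}_{n,\lambda}(x)\frac{t^{n}}{n!}$ (expansion in powers of $t$). *)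

(* Defs.v *)
From Stdlib Require Import Reals.
From Coquelicot Require Import Coquelicot.
Open Scope R_scope.

(* Generating function t |-> e_lam(x e^t) e_lam^{-1}(x) = ((1+lam x e^t)/(1+lam x))^(1/lam). *)
Definition bel_gf (lam x : R) (t : R) : R :=
  Rpower ((1 + lam * x * exp t) / (1 + lam * x)) (1 / lam).

(* Bel_{n,lam}(x) = n! * [t^n] of the generating function = n-th derivative at t = 0. *)
Definition Bel (n : nat) (lam x : R) : R := Derive_n (bel_gf lam x) n 0.

(* Main.v *)
Require Import Defs.
From Stdlib Require Import Reals Lra Lia.
From Coquelicot Require Import Coquelicot.
Open Scope R_scope.

Definition UU (lam x t : R) : Prop := 0 < 1 + lam * x * exp t.

Lemma UU_loc (lam x t : R) : UU lam x t -> locally t (UU lam x).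
Proof.
  intros H. unfold UU in *.
  assert (Hc : continuity_pt (fun s => 1 + lam * x * exp s) t).
  { apply derivable_continuous_pt. reg. }
  apply continuity_pt_locally with (eps := mkposreal _ (Rdiv_lt_0_compat _ 2 H ltac:(lra))) in Hc.
  eapply filter_imp; [|exact Hc]. simpl. intros u Hu.
  apply Rabs_def2 in Hu. lra.
Qed.

Inductive ex := EC (r : R) | EE | EY | EF | EA (a b : ex) | EM (a b : ex).

Fixpoint ev (lam x : R) (e : ex) (t : R) : R :=
  match e with
  | EC r => r
  | EE => exp t
  | EY => / (1 + lam * x * exp t)
  | EF => bel_gf lam x t
  | EA a b => ev lam x a t + ev lam x b t
  | EM a b => ev lam x a t * ev lam x b t
  end.

Fixpoint dE (lam x : R) (e : ex) : ex :=
  match e with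
  | EC _ => EC 0
  | EE => EE
  | EY => EM (EC (- lam * x)) (EM EE (EM EY EY))
  | EF => EM (EC x) (EM EE (EM EY EF))
  | EA a b => EA (dE lam x a) (dE lam x b)
  | EM a b => EA (EM (dE lam x a) b) (EM a (dE lam x b))
  end.

Lemma ev_der (lam x : R) (e : ex) (t : R) : lam <> 0 -> 0 < 1 + lam * x -> UU lam x t ->
  is_derive (ev lam x e) t (ev lam x (dE lam x e) t).
Proof.
  intros hl hx H. unfold UU in H.
  induction e; simpl.
  - auto_derive; auto.
  - apply is_derive_exp.
  - auto_derive. lra. field. lra.
  - unfold bel_gf, Rpower. auto_derive.
    + apply Rdiv_lt_0_compat; lra.
    + field_simplify_eq. 2: lra. 
      reflexivity.
  - apply (is_derive_plus (ev lam x e1) (ev lam x e2)); assumption.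
  - apply (is_derive_mult (ev lam x e1) (ev lam x e2)); try assumption.
    intros; apply Rmult_comm.
Qed.

Lemma Dn_ev (lam x : R) (k : nat) : lam <> 0 -> 0 < 1 + lam * x -> forall t, UU lam x t ->
  Derive_n (bel_gf lam x) k t = ev lam x (Nat.iter k (dE lam x) EF) t.
Proof.
  intros hl hx. induction k; intros t Ht.
  - reflexivity.
  - simpl Derive_n.
    rewrite (Derive_ext_loc _ (ev lam x (Nat.iter k (dE lam x) EF))).
    + apply is_derive_unique. apply ev_der; auto.
    + eapply filter_imp; [|apply (UU_loc _ _ _ Ht)]. intros; apply IHk; auto.
Qed.

Lemma D_der (lam x : R) (k : nat) (t : R) : lam <> 0 -> 0 < 1 + lam * x -> UU lam x t ->
  is_derive (Derive_n (bel_gf lam x) k) t (Derive_n (bel_gf lam x) (S k) t).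
Proof.
  intros hl hx Ht.
  rewrite (Dn_ev _ _ (S k)); auto.
  apply (is_derive_ext_loc (ev lam x (Nat.iter k (dE lam x) EF))).
  - eapply filter_imp; [|apply (UU_loc _ _ _ Ht)]. intros; symmetry; apply Dn_ev; auto.
  - apply ev_der; auto.
Qed.

Lemma sum_der (h : nat -> R -> R) (h' : nat -> R) (t : R) (k : nat) :
  (forall l, is_derive (h l) t (h' l)) ->
  is_derive (fun s => sum_f_R0 (fun l => h l s) k) t (sum_f_R0 h' k).
Proof.
  intros H. induction k; simpl.
  - apply H.
  - apply (is_derive_plus (fun s => sum_f_R0 (fun l => h l s) k) (h (S k))); auto.
Qed.

Lemma pascal_sum (a : nat -> R) (k : nat) :
  sum_f_R0 (fun l => Binomial.C k l * (a l + a (S l))) k =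
  sum_f_R0 (fun l => Binomial.C (S k) l * a l) (S k).
Proof.
  destruct k.
  - simpl. rewrite !C_n_0, C_n_n. ring.
  - rewrite (decomp_sum (fun l => Binomial.C (S (S k)) l * a l) (S (S k))) by lia.
    simpl Init.Nat.pred.
    rewrite (tech5 (fun i => Binomial.C (S (S k)) (S i) * a (S i)) k).
    rewrite C_n_0, C_n_n.
    rewrite (sum_eq (fun i => Binomial.C (S (S k)) (S i) * a (S i))
      (fun i => Binomial.C (S k) i * a (S i) + Binomial.C (S k) (S i) * a (S i))).
    2:{ intros i Hi. rewrite <- pascal by lia. ring. }
    rewrite plus_sum.
    rewrite (sum_eq (fun l => Binomial.C (S k) l * (a l + a (S l)))
      (fun l => Binomial.C (S k) l * a l + Binomial.C (S k) l * a (S l))) by (intros; ring).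
    rewrite plus_sum.
    rewrite (decomp_sum (fun l => Binomial.C (S k) l * a l) (S k)) by lia.
    simpl Init.Nat.pred.
    rewrite (tech5 (fun l => Binomial.C (S k) l * a (S l)) k).
    rewrite C_n_0, C_n_n. ring.
Qed.

Lemma main_rec (lam x : R) (k : nat) : lam <> 0 -> 0 < 1 + lam * x -> forall t, UU lam x t ->
  Derive_n (bel_gf lam x) (S k) t = x * exp t *
    sum_f_R0 (fun l => Binomial.C k l * (Derive_n (bel_gf lam x) l t
        - lam * Derive_n (bel_gf lam x) (S l) t)) k.
Proof.
  intros hl hx. set (D := Derive_n (bel_gf lam x)).
  induction k; intros t Ht.
  - simpl sum_f_R0. rewrite C_n_0. unfold D. rewrite (Dn_ev _ _ 1) by auto.
    simpl. unfold UU in Ht. field. lra.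
  - change (D (S (S k)) t) with (Derive (D (S k)) t).
    rewrite (Derive_ext_loc _ (fun s => x * exp s * sum_f_R0 (fun l => Binomial.C k l * (D l s - lam * D (S l) s)) k)).
    2:{ eapply filter_imp; [|apply (UU_loc _ _ _ Ht)]. intros; apply IHk; auto. }
    apply is_derive_unique.
    set (a := fun l => D l t - lam * D (S l) t).
    assert (E : x * exp t * sum_f_R0 (fun l => Binomial.C (S k) l * (D l t - lam * D (S l) t)) (S k)
      = x * exp t * sum_f_R0 (fun l => Binomial.C k l * a l) k
          + x * exp t * sum_f_R0 (fun l => Binomial.C k l * a (S l)) k).
    { transitivity (x * exp t * sum_f_R0 (fun l => Binomial.C k l * (a l + a (S l))) k).
      { rewrite (pascal_sum a k). reflexivity. }
      rewrite <- Rmult_plus_distr_l, <- plus_sum.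
        f_equal. apply sum_eq. intros; unfold a; ring. }
    rewrite E.
    assert (H1 : is_derive (fun s => x * exp s) t (x * exp t)).
    { auto_derive; auto. ring. }
    assert (H2 : is_derive (fun s => sum_f_R0 (fun l => Binomial.C k l * (D l s - lam * D (S l) s)) k) t
               (sum_f_R0 (fun l => Binomial.C k l * a (S l)) k)).
    { apply (sum_der (fun l s => Binomial.C k l * (D l s - lam * D (S l) s))).
      intros l. unfold a.
      pose proof (D_der lam x l t hl hx Ht) as Hl.
      pose proof (D_der lam x (S l) t hl hx Ht) as HSl.
      exact (is_derive_scal _ t (Binomial.C k l) _
               (is_derive_minus _ _ t _ _ Hl (is_derive_scal _ t lam _ HSl))). }
    exact (is_derive_mult (K:=R_AbsRing) (fun s => x * exp s) _ t _ _ H1 H2 Rmult_comm).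
Qed.

Theorem theorem8 (lam x : R) (n : nat) (hlam : lam <> 0) (hx : 0 < 1 + lam * x) :
  Bel (S n) lam x =
  x * sum_f_R0 (fun l => Binomial.C n l * (Bel l lam x - lam * Bel (S l) lam x)) n.
Proof.
  unfold Bel. rewrite (main_rec lam x n hlam hx 0).
  - rewrite exp_0, Rmult_1_r. reflexivity.
  - unfold UU. rewrite exp_0, Rmult_1_r. exact hx.
Qed.
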